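(* Let $P,K:\mathbb{N}_0\to\mathbb{N}_0$ be a scaling with $\lim_{n\to\infty}K_n^2/P_n=0$, and let $p:\mathbb{N}_0\to[0,1]$ satisfy $p_n\sim 1-q(\theta_n)$. Then $$\frac{C_{\rm K}(\theta_n)}{p_n}\sim 1+\frac{P_n}{K_n^3}.$$
   Context: For positive integers $K\le P$, $\theta=(K,P)$: $q(\theta)=\binom{P-K}{K}/\binom{P}{K}$ if $2K\le P$ and $0$ otherwise; $r(\theta)=\binom{P-2K}{K}/\binom{P}{K}$ if $3K\le P$ and $0$ otherwise; $\beta(\theta)=(1-q)^3+q^3-qr$; $C_{\rm K}(\theta)=\beta(\theta)/(1-q(\theta))^2$ is the clustering coefficient $\mathbb{P}[E_{12}\mid E_{13}\cap E_{23}]$ of the random key graph (nodes receive i.i.d. uniform $K$-subsets of $\{1,\dots,P\}$, adjacent iff subsets intersect). $p_n$ equals the clustering coefficient $C_{\rm ER}(p_n)$ of the Erdős–Rényi graph $\mathbb{G}(n;p_n)$. A scaling is a pair $P,K:\mathbb{N}_0\to\mathbb{N}_0$ with $1\le K_n\le P_n$, and $\theta_n=(K_n,P_n)$; $a_n\sim b_n$ means $a_n/b_n\to1$. *)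

(* Defs.v *)
From Stdlib Require Import Reals Arith.
Open Scope R_scope.

Definition q_key (K P : nat) : R :=
  if (2 * K <=? P)%nat then C (P - K) K / C P K else 0.

Definition r_key (K P : nat) : R :=
  if (3 * K <=? P)%nat then C (P - 2 * K) K / C P K else 0.

Definition beta_key (K P : nat) : R :=
  let q := q_key K P in
  (1 - q) ^ 3 + q ^ 3 - q * r_key K P.

Definition CK (K P : nat) : R := beta_key K P / (1 - q_key K P) ^ 2.

Definition asym_eq (a b : nat -> R) : Prop := Un_cv (fun n => a n / b n) 1.

(* Main.v *)
Require Import Defs.
From Stdlib Require Import Reals Arith Lra Lia Psatz.
Open Scope R_scope.

Fixpoint prodR (f : nat -> R) (k : nat) : R :=
  match k with O => 1 | S k => prodR f k * f k end.

Lemma prodR_mult f g k : prodR (fun i => f i * g i) k = prodR f k * prodR g k.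
Proof. induction k; simpl; [ring|rewrite IHk; ring]. Qed.

Lemma prodR_inv f k : prodR (fun i => / f i) k = / prodR f k.
Proof. induction k; simpl; [now rewrite Rinv_1| rewrite IHk, Rinv_mult; ring]. Qed.

Lemma prodR_ext f g k : (forall i, (i < k)%nat -> f i = g i) -> prodR f k = prodR g k.
Proof. induction k; intros H; simpl; auto. rewrite IHk, H; auto. Qed.

Lemma prodR_bounds f k lo hi : (forall i, (i < k)%nat -> lo <= f i <= hi) -> 0 <= lo ->
  lo ^ k <= prodR f k <= hi ^ k.
Proof.
  induction k; intros H Hlo; simpl. lra.
  destruct IHk as [H1 H2]; auto.
  assert (Hk := H k (Nat.lt_succ_diag_r k)).
  assert (0 <= lo ^ k) by (apply pow_le; auto).
  split.
  - rewrite Rmult_comm. apply Rmult_le_compat; lra.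
  - rewrite (Rmult_comm hi). apply Rmult_le_compat; lra.
Qed.

Lemma fact_prod m k : (k <= m)%nat ->
  INR (fact m) = INR (fact (m - k)) * prodR (fun i => INR m - INR i) k.
Proof.
  induction k; intros H; simpl. rewrite Nat.sub_0_r; ring.
  rewrite IHk by lia.
  replace (m - k)%nat with (S (m - S k)) by lia.
  change (fact (S (m - S k))) with (S (m - S k) * fact (m - S k))%nat.
  rewrite mult_INR, S_INR, minus_INR by lia. rewrite S_INR. ring.
Qed.

Lemma q_prod K P : (2 * K <= P)%nat ->
  q_key K P = prodR (fun i => (INR P - INR K - INR i) / (INR P - INR i)) K.
Proof.
  intros H. unfold q_key. destruct (Nat.leb_spec (2*K) P); [|lia].
  unfold C.
  assert (E1 := fact_prod P K ltac:(lia)).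
  assert (E2 := fact_prod (P - K) K ltac:(lia)).
  set (A := prodR (fun i => INR P - INR i) K) in *.
  set (B := prodR (fun i => INR (P - K) - INR i) K) in *.
  assert (HA : A <> 0).
  { intro Z. rewrite Z, Rmult_0_r in E1. exact (INR_fact_neq_0 _ E1). }
  rewrite (prodR_ext _ (fun i => (INR P - INR K - INR i) * / (INR P - INR i))) by reflexivity.
  rewrite prodR_mult, prodR_inv.
  rewrite (prodR_ext _ (fun i => INR (P - K) - INR i)) by (intros; rewrite minus_INR by lia; ring).
  fold B. fold A. rewrite E1, E2 at 1.
  rewrite E2.
  assert (F1 := INR_fact_neq_0 K). assert (F2 := INR_fact_neq_0 (P - K - K)).
  assert (F3 := INR_fact_neq_0 (P - K)).
  assert (HB : B <> 0) by (intro Z; rewrite Z, Rmult_0_r in E2; auto).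
  field. repeat split; auto.
Qed.

Lemma r_prod K P : (3 * K <= P)%nat ->
  r_key K P = prodR (fun i => (INR P - 2 * INR K - INR i) / (INR P - INR i)) K.
Proof.
  intros H. unfold r_key. destruct (Nat.leb_spec (3*K) P); [|lia].
  unfold C.
  assert (E1 := fact_prod P K ltac:(lia)).
  assert (E2 := fact_prod (P - 2 * K) K ltac:(lia)).
  set (A := prodR (fun i => INR P - INR i) K) in *.
  set (B := prodR (fun i => INR (P - 2 * K) - INR i) K) in *.
  assert (HA : A <> 0).
  { intro Z. rewrite Z, Rmult_0_r in E1. exact (INR_fact_neq_0 _ E1). }
  rewrite (prodR_ext _ (fun i => (INR P - 2 * INR K - INR i) * / (INR P - INR i))) by reflexivity.
  rewrite prodR_mult, prodR_inv.
  rewrite (prodR_ext _ (fun i => INR (P - 2 * K) - INR i)) by (intros; rewrite minus_INR, mult_INR by lia; simpl; ring).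
  fold B. fold A. rewrite E1, E2.
  assert (F1 := INR_fact_neq_0 K). assert (F2 := INR_fact_neq_0 (P - 2 * K - K)).
  assert (F3 := INR_fact_neq_0 (P - K)).
  assert (F4 := INR_fact_neq_0 (P - 2 * K)).
  assert (HB : B <> 0) by (intro Z; rewrite Z, Rmult_0_r in E2; auto).
  field. repeat split; auto.
Qed.

Lemma bern1 x n : 0 <= x <= 1 -> 1 - INR n * x <= (1 - x) ^ n.
Proof.
  intros Hx; induction n. simpl; lra.
  rewrite S_INR; simpl. assert (0 <= INR n) by apply pos_INR.
  assert ((1 - INR n * x) * (1 - x) <= (1-x)^n * (1-x)) by (apply Rmult_le_compat_r; lra).
  nra.
Qed.

Lemma bern1p c n : 0 <= c -> 1 + INR n * c <= (1 + c) ^ n.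
Proof.
  intros Hc; induction n. simpl; lra.
  rewrite S_INR; simpl. assert (0 <= INR n) by apply pos_INR.
  assert ((1 + INR n * c) * (1 + c) <= (1+c)^n * (1+c)) by (apply Rmult_le_compat_r; lra).
  nra.
Qed.

Lemma bern2 x n : 0 <= x <= 1 -> (1 - x) ^ n <= 1 - INR n * x + INR n ^ 2 * x ^ 2 / 2.
Proof.
  intros Hx; induction n. simpl; lra.
  rewrite S_INR; simpl. assert (0 <= INR n) by apply pos_INR.
  assert ((1-x)^n * (1 - x) <= (1 - INR n * x + INR n ^ 2 * x ^ 2 / 2) * (1-x)) by (apply Rmult_le_compat_r; lra).
  assert (0 <= INR n ^ 2 * x ^ 3) by (apply Rmult_le_pos; [nra| apply pow_le; lra]).
  nra.
Qed.

Lemma bern3 c n : 0 <= c -> (1 + c) ^ n * (1 - INR n * c) <= 1.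
Proof.
  intros Hc; induction n. simpl; lra.
  rewrite S_INR; simpl. assert (0 <= INR n) by apply pos_INR.
  assert (0 <= (1+c)^n) by (apply pow_le; lra).
  assert (0 <= (1+c)^n * ((INR n + 1) * c^2)) by (apply Rmult_le_pos; nra).
  nra.
Qed.

Lemma pow_le1 x n : 0 <= x <= 1 -> x ^ n <= 1.
Proof.
  intros Hx; induction n. simpl; lra. simpl.
  assert (0 <= x^n) by (apply pow_le; lra). nra.
Qed.

Lemma div_anti m a b : 0 <= m -> 0 < a <= b -> m / b <= m / a.
Proof.
  intros Hm Hab. unfold Rdiv. apply Rmult_le_compat_l; auto.
  apply Rinv_le_contravar; lra.
Qed.

Lemma div_nonneg a b : 0 <= a -> 0 < b -> 0 <= a / b.
Proof. intros. unfold Rdiv. apply Rmult_le_pos; auto. left; apply Rinv_0_lt_compat; auto. Qed.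

Lemma frac01 a b : 0 <= a <= b -> 0 < b -> 0 <= a / b <= 1.
Proof.
  intros H Hb. split. apply div_nonneg; lra.
  apply (Rmult_le_reg_r b); auto. unfold Rdiv. rewrite Rmult_assoc, Rinv_l; lra.
Qed.

Lemma pointwise K P : (1 <= K)%nat -> (K <= P)%nat -> INR K ^ 2 / INR P <= / 100 ->
  let k := INR K in let y := INR P in let s := k / y in let t := k ^ 2 / y in
  let q := q_key K P in let r := r_key K P in
  let w := s * t / ((1 - s) * (1 - 3 * s)) in
  (t - t ^ 2 / 2 <= 1 - q <= t / (1 - s)) /\ (1 - 2 * t / (1 - s) <= r <= 1) /\
  (r * (s * t) <= q ^ 2 - r <= r * (w / (1 - w))).
Proof.
  intros HK HKP Ht k y s t q r w.
  assert (Hk : 1 <= k) by (apply (le_INR 1); auto).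
  assert (Hyk : k <= y) by (apply le_INR; auto).
  assert (Hy : 0 < y) by lra.
  assert (Hk2 : k ^ 2 <= y / 100).
  { replace (k ^ 2) with (k ^ 2 / y * y) by (field; lra). fold k y in Ht. nra. }
  assert (H100 : 100 * k <= y) by nra.
  assert (H3K : (3 * K <= P)%nat).
  { apply INR_le. rewrite mult_INR. simpl. fold k y. lra. }
  assert (Hs : s = k / y) by reflexivity.
  assert (Hsb : 0 < s <= / 100).
  { split. unfold s; apply Rdiv_lt_0_compat; lra.
    apply (Rmult_le_reg_r y); auto. unfold s, Rdiv. rewrite Rmult_assoc, Rinv_l; lra. }
  assert (Htb : 0 < t <= / 100).
  { split; auto. unfold t; apply Rdiv_lt_0_compat; try lra; nra. }
  assert (Hst : t = k * s) by (unfold t, s; field; lra).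
  unfold q, r. rewrite q_prod, r_prod by lia. fold k y.
  assert (Hj : forall i, (i < K)%nat -> 0 <= INR i <= k - 1).
  { intros i Hi. split. apply pos_INR. assert (H := le_INR (S i) K Hi). rewrite S_INR in H. fold k in H. lra. }
  set (fq := fun i => (y - k - INR i) / (y - INR i)).
  set (fr := fun i => (y - 2 * k - INR i) / (y - INR i)).
  set (fg := fun i => 1 + k ^ 2 / ((y - INR i) * (y - 2 * k - INR i))).
  assert (Ha1 : 0 <= k / (y - k) <= 1) by (apply frac01; lra).
  assert (Ha2 : 0 <= 2 * k / (y - k) <= 1) by (apply frac01; lra).
  assert (Ha3 : 0 <= k / y <= 1) by (apply frac01; lra).
  assert (Ha4 : 0 <= 2 * k / y <= 1) by (apply frac01; lra).
  assert (Bq : forall i, (i < K)%nat -> 1 - k / (y - k) <= fq i <= 1 - k / y).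
  { intros i Hi. specialize (Hj i Hi). unfold fq.
    replace ((y - k - INR i) / (y - INR i)) with (1 - k / (y - INR i)) by (field; lra).
    assert (k / y <= k / (y - INR i)) by (apply div_anti; lra).
    assert (k / (y - INR i) <= k / (y - k)) by (apply div_anti; lra). lra. }
  assert (Br : forall i, (i < K)%nat -> 1 - 2 * k / (y - k) <= fr i <= 1 - 2 * k / y).
  { intros i Hi. specialize (Hj i Hi). unfold fr.
    replace ((y - 2 * k - INR i) / (y - INR i)) with (1 - 2 * k / (y - INR i)) by (field; lra).
    assert (2 * k / y <= 2 * k / (y - INR i)) by (apply div_anti; lra).
    assert (2 * k / (y - INR i) <= 2 * k / (y - k)) by (apply div_anti; lra). lra. }
  assert (Bg : forall i, (i < K)%nat -> 1 + k ^ 2 / (y * y) <= fg i <= 1 + k ^ 2 / ((y - k) * (y - 3 * k))).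
  { intros i Hi. specialize (Hj i Hi). unfold fg.
    assert (k ^ 2 / (y * y) <= k ^ 2 / ((y - INR i) * (y - 2 * k - INR i))) by (apply div_anti; nra).
    assert (k ^ 2 / ((y - INR i) * (y - 2 * k - INR i)) <= k ^ 2 / ((y - k) * (y - 3 * k))) by (apply div_anti; nra).
    lra. }
  assert (Eqf : forall i, (i < K)%nat -> fq i * fq i = fr i * fg i).
  { intros i Hi. specialize (Hj i Hi). unfold fq, fr, fg. field. split; lra. }
  assert (Qsq : prodR fq K ^ 2 = prodR fr K * prodR fg K).
  { rewrite <- prodR_mult. rewrite (prodR_ext (fun i => fr i * fg i) (fun i => fq i * fq i)) by (intros i0 Hi0; symmetry; apply Eqf; exact Hi0).
    rewrite prodR_mult. ring. }
  destruct (prodR_bounds fq K _ _ Bq ltac:(lra)) as [Q1 Q2].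
  destruct (prodR_bounds fr K _ _ Br ltac:(lra)) as [R1 R2].
  destruct (prodR_bounds fg K _ _ Bg ltac:(assert (0 <= k ^ 2 / (y * y)) by (apply div_nonneg; nra); lra)) as [G1 G2].
  assert (Q1' := bern1 (k / (y - k)) K Ha1). fold k in Q1'.
  assert (Q2' := bern2 (k / y) K Ha3). fold k in Q2'.
  assert (R1' := bern1 (2 * k / (y - k)) K Ha2). fold k in R1'.
  assert (R2' := pow_le1 (1 - 2 * k / y) K ltac:(lra)).
  assert (G1' := bern1p (k ^ 2 / (y * y)) K ltac:(apply div_nonneg; nra)). fold k in G1'.
  assert (Hc : 0 <= k ^ 2 / ((y - k) * (y - 3 * k))) by (apply div_nonneg; nra).
  assert (G2' := bern3 _ K Hc). fold k in G2'.
  assert (E1 : k * (k / (y - k)) = t / (1 - s)) by (unfold t, s; field; lra).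
  assert (E2 : k * (k / y) = t) by (unfold t; field; lra).
  assert (E3 : k ^ 2 * (k / y) ^ 2 = t ^ 2) by (unfold t; field; lra).
  assert (E4 : k * (2 * k / (y - k)) = 2 * t / (1 - s)) by (unfold t, s; field; lra).
  assert (E5 : k * (k ^ 2 / (y * y)) = s * t) by (unfold t, s; field; lra).
  assert (E6 : k * (k ^ 2 / ((y - k) * (y - 3 * k))) = w).
  { unfold w, t, s. field. repeat split; lra. }
  rewrite E6 in G2'. rewrite E5 in G1'.
  assert (Hd : 0.9 <= (1 - s) * (1 - 3 * s)) by nra.
  assert (Hw : 0 <= w < 1).
  { split. unfold w. apply div_nonneg; nra.
    unfold w. apply (Rmult_lt_reg_r ((1 - s) * (1 - 3 * s))); [lra|].
    unfold Rdiv. rewrite Rmult_assoc, Rinv_l by lra. nra. }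
  rewrite <- E6 in Hw. 
  set (c := k ^ 2 / ((y - k) * (y - 3 * k))) in *.
  set (Qq := prodR fq K) in *. set (Rr := prodR fr K) in *. set (Gg := prodR fg K) in *.
  assert (HA : 0 <= 2 * t / (1 - s) <= 1) by (apply frac01; lra).
  rewrite E1, E2, E3, E4 in *.
  split; [lra|]. split; [lra|].
  assert (HR : 0 <= Rr) by lra.
  rewrite E6 in Hw. assert (HG : Gg * (1 - w) <= 1).
  { assert (Gg * (1 - w) <= (1 + c) ^ K * (1 - w)) by (apply Rmult_le_compat_r; lra). lra. }
  assert (HG2 : Gg - 1 <= w / (1 - w)).
  { apply (Rmult_le_reg_r (1 - w)); [lra|].
    replace (w / (1 - w) * (1 - w)) with w by (field; lra). lra. }
  replace (Qq ^ 2 - Rr) with (Rr * (Gg - 1)) by (rewrite Qsq; ring).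
  split; apply Rmult_le_compat_l; lra.
Qed.

From Coquelicot Require Import Coquelicot.
Open Scope R_scope.

Lemma lim_c a : is_lim_seq (fun _ => a) a.
Proof. apply is_lim_seq_const. Qed.
Lemma lim_plus (u v : nat -> R) (a b c : R) : is_lim_seq u a -> is_lim_seq v b -> c = a + b -> is_lim_seq (fun n => u n + v n) c.
Proof. intros H1 H2 H3; subst c; apply is_lim_seq_plus'; assumption. Qed.
Lemma lim_minus (u v : nat -> R) (a b c : R) : is_lim_seq u a -> is_lim_seq v b -> c = a - b -> is_lim_seq (fun n => u n - v n) c.
Proof. intros H1 H2 H3; subst c; apply is_lim_seq_minus'; assumption. Qed.
Lemma lim_mult (u v : nat -> R) (a b c : R) : is_lim_seq u a -> is_lim_seq v b -> c = a * b -> is_lim_seq (fun n => u n * v n) c.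
Proof. intros H1 H2 H3; subst c; apply is_lim_seq_mult'; assumption. Qed.
Lemma lim_inv (u : nat -> R) (a c : R) : is_lim_seq u a -> a <> 0 -> c = / a -> is_lim_seq (fun n => / u n) c.
Proof. intros H Ha Hc; subst. apply (is_lim_seq_inv u a) in H. exact H. intro Z; apply Ha; injection Z; auto. Qed.

Lemma ev_and (A B : nat -> Prop) : eventually A -> eventually B -> eventually (fun n => A n /\ B n).
Proof. intros [N1 H1] [N2 H2]. exists (N1 + N2)%nat. intros n Hn; split; [apply H1|apply H2]; lia. Qed.
Lemma ev_mono (A B : nat -> Prop) : (forall n, A n -> B n) -> eventually A -> eventually B.
Proof. intros H [N H1]. exists N; auto. Qed.

Lemma ratio_squeeze (x t lo hi : nat -> R) :
  eventually (fun n => 0 < t n /\ lo n * t n <= x n <= hi n * t n) ->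
  is_lim_seq lo 1 -> is_lim_seq hi 1 -> is_lim_seq (fun n => x n / t n) 1.
Proof.
  intros Hev Hl Hh. apply (is_lim_seq_le_le_loc lo _ hi); auto.
  refine (ev_mono _ _ _ Hev). intros n [Ht [H1 H2]].
  split.
  - replace (lo n) with (lo n * t n / t n) by (field; lra).
    unfold Rdiv; apply Rmult_le_compat_r; [left; apply Rinv_0_lt_compat|]; lra.
  - replace (hi n) with (hi n * t n / t n) by (field; lra).
    unfold Rdiv; apply Rmult_le_compat_r; [left; apply Rinv_0_lt_compat|]; lra.
Qed.

Lemma alg (k y q r pp : R) : 0 < k -> 0 < y -> 0 < 1 - q ->
  ((1 - q) ^ 3 + q ^ 3 - q * r) / (1 - q) ^ 2 / pp / (1 + y / k ^ 3) =
  ((1 - q) * / pp) * (1 + (y / k ^ 3) / (1 + y / k ^ 3) *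
     (q * ((q ^ 2 - r) / (k / y * (k ^ 2 / y))) * / ((1 - q) / (k ^ 2 / y)) ^ 3 - 1)).
Proof.
  intros Hk Hy Hq. assert (0 <= y / k ^ 3) by (apply div_nonneg; [lra|apply pow_lt; lra]).
  unfold Rdiv in *. set (ip := / pp). field. assert (0 < k ^ 3) by (apply pow_lt; lra). repeat split; lra.
Qed.

Theorem corollary3 (P K : nat -> nat) (p : nat -> R) :
  (forall n, (1 <= K n)%nat /\ (K n <= P n)%nat) ->
  Un_cv (fun n => (INR (K n)) ^ 2 / INR (P n)) 0 ->
  (forall n, 0 <= p n <= 1) ->
  asym_eq p (fun n => 1 - q_key (K n) (P n)) ->
  asym_eq (fun n => CK (K n) (P n) / p n)
          (fun n => 1 + INR (P n) / (INR (K n)) ^ 3).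
Proof.
  intros HKP Ht0 Hp Hasym.
  set (k := fun n => INR (K n)). set (y := fun n => INR (P n)).
  set (s := fun n => k n / y n). set (t := fun n => k n ^ 2 / y n).
  set (q := fun n => q_key (K n) (P n)). set (r := fun n => r_key (K n) (P n)).
  set (w := fun n => s n * t n / ((1 - s n) * (1 - 3 * s n))).
  assert (Hk : forall n, 1 <= k n) by (intro n; apply (le_INR 1); apply HKP).
  assert (Hy : forall n, k n <= y n) by (intro n; apply le_INR; apply HKP).
  assert (Lt : is_lim_seq t 0) by (apply is_lim_seq_Reals; exact Ht0).
  assert (Ev : eventually (fun n => t n <= / 100)).
  { destruct (Ht0 (/100)) as [N HN]; [lra|]. exists N; intros n Hn.
    specialize (HN n Hn). unfold R_dist in HN. rewrite Rminus_0_r in HN.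
    apply Rabs_def2 in HN. unfold t, k, y. lra. }
  assert (PW : eventually (fun n => 
     (t n - t n ^ 2 / 2 <= 1 - q n <= t n / (1 - s n)) /\ (1 - 2 * t n / (1 - s n) <= r n <= 1) /\
     (r n * (s n * t n) <= q n ^ 2 - r n <= r n * (w n / (1 - w n))) /\
     0 < s n <= t n /\ t n <= / 100)).
  { refine (ev_mono _ _ _ Ev). intros n Hn.
    destruct (HKP n) as [H1 H2].
    assert (HH := pointwise (K n) (P n) H1 H2 Hn). cbv zeta in HH.
    assert (Hs : 0 < s n <= t n).
    { specialize (Hk n); specialize (Hy n). unfold s, t. split.
      apply Rdiv_lt_0_compat; lra.
      unfold Rdiv. apply Rmult_le_compat_r. left; apply Rinv_0_lt_compat; lra. nra. }
    unfold w, s, t, q, r, k, y in *. tauto. }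
  assert (L0 : is_lim_seq (fun _ => 0) 0) by apply lim_c.
  assert (L1 : is_lim_seq (fun _ => 1) 1) by apply lim_c.
  assert (Ls : is_lim_seq s 0).
  { apply (is_lim_seq_le_le_loc (fun _ => 0) _ t); auto.
    refine (ev_mono _ _ _ PW). intros n H. lra. }
  assert (Ls1 : is_lim_seq (fun n => / (1 - s n)) 1).
  { apply (lim_inv _ 1); [apply (lim_minus _ _ 1 0)|..]; auto; lra. }
  assert (La : is_lim_seq (fun n => (1 - q n) / t n) 1).
  { apply (ratio_squeeze _ _ (fun n => 1 - t n / 2) (fun n => / (1 - s n))); auto.
    - refine (ev_mono _ _ _ PW). intros n H. split; [lra|].
      replace ((1 - t n / 2) * t n) with (t n - t n ^ 2 / 2) by (unfold Rdiv; ring).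
      replace (/ (1 - s n) * t n) with (t n / (1 - s n)) by (unfold Rdiv; ring). lra.
    - apply (lim_minus _ _ 1 0); auto. apply (is_lim_seq_ext (fun n => t n * / 2)).
      intro; unfold Rdiv; ring. apply (lim_mult _ _ 0 (/2)); auto. apply lim_c. ring. ring. }
  assert (Lq : is_lim_seq q 1).
  { apply (is_lim_seq_ext_loc (fun n => 1 - (1 - q n) / t n * t n)).
    refine (ev_mono _ _ _ PW). intros n H. field. lra.
    apply (lim_minus _ _ 1 0); auto. apply (lim_mult _ _ 1 0); auto. ring. ring. }
  assert (Lr : is_lim_seq r 1).
  { apply (is_lim_seq_le_le_loc (fun n => 1 - 2 * t n / (1 - s n)) _ (fun _ => 1)); auto.
    refine (ev_mono _ _ _ PW). intros n H. lra.
    apply (lim_minus _ _ 1 0); auto. apply (lim_mult _ _ 0 1); auto.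
    apply (is_lim_seq_ext (fun n => 2 * t n)). intro; reflexivity.
    apply (lim_mult _ _ 2 0); auto. apply lim_c. ring. ring. ring. }
  assert (Ld : is_lim_seq (fun n => / ((1 - s n) * (1 - 3 * s n))) 1).
  { apply (lim_inv _ 1); [| lra | lra]. apply (lim_mult _ _ 1 1); [| |ring].
    apply (lim_minus _ _ 1 0); auto; ring.
    apply (lim_minus _ _ 1 0); auto; [|ring]. apply (lim_mult _ _ 3 0); auto; [apply lim_c|ring]. }
  assert (Lw : is_lim_seq w 0).
  { apply (is_lim_seq_ext (fun n => s n * t n * / ((1 - s n) * (1 - 3 * s n)))).
    intro; reflexivity. apply (lim_mult _ _ 0 1); auto; [|ring].
    apply (lim_mult _ _ 0 0); auto; ring. }
  assert (Lb : is_lim_seq (fun n => (q n ^ 2 - r n) / (s n * t n)) 1).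
  { apply (ratio_squeeze _ _ r (fun n => r n * / ((1 - s n) * (1 - 3 * s n)) * / (1 - w n))); auto.
    - refine (ev_mono _ _ _ PW). intros n H. split; [nra|].
      replace (r n * / ((1 - s n) * (1 - 3 * s n)) * / (1 - w n) * (s n * t n))
        with (r n * (w n / (1 - w n))) by (unfold w, Rdiv; ring). lra.
    - apply (lim_mult _ _ 1 1); [|apply (lim_inv _ 1)|]; try lra.
      apply (lim_mult _ _ 1 1); auto; ring. apply (lim_minus _ _ 1 0); auto; ring. }
  set (a := fun n => (1 - q n) / t n) in *.
  set (b := fun n => (q n ^ 2 - r n) / (s n * t n)) in *.
  assert (LZ : is_lim_seq (fun n => q n * b n * / a n ^ 3 - 1) 0).
  { apply (lim_minus _ _ 1 1); [|apply lim_c|ring].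
    apply (lim_mult _ _ 1 1); [apply (lim_mult _ _ 1 1); auto; ring| |ring].
    apply (lim_inv _ 1); [|lra|lra].
    apply (is_lim_seq_ext (fun n => a n * (a n * (a n * 1)))). intro; reflexivity.
    apply (lim_mult _ _ 1 1); auto; [|ring]. apply (lim_mult _ _ 1 1); auto; [|ring].
    apply (lim_mult _ _ 1 1); auto; ring. }
  unfold asym_eq. apply is_lim_seq_Reals.
  set (Y := fun n => y n / k n ^ 3).
  apply (is_lim_seq_ext_loc (fun n => ((1 - q n) * / p n) * (1 + Y n / (1 + Y n) * (q n * b n * / a n ^ 3 - 1)))).
  { refine (ev_mono _ _ _ PW). intros n H. symmetry.
    assert (Hkn := Hk n). assert (Hyn := Hy n).
    exact (alg (k n) (y n) (q n) (r n) (p n) ltac:(lra) ltac:(lra) ltac:(nra)). }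
  apply (lim_mult _ _ 1 1); [| |ring].
  - apply is_lim_seq_Reals in Hasym.
    apply (is_lim_seq_ext (fun n => / (p n / (1 - q_key (K n) (P n))))).
    intro n. unfold Rdiv. rewrite Rinv_mult, Rinv_inv. fold (q n). ring.
    apply (lim_inv _ 1); auto; lra.
  - apply (lim_plus _ _ 1 0); [apply lim_c| |ring].
    apply is_lim_seq_abs_0. apply is_lim_seq_abs_0 in LZ.
    apply (is_lim_seq_le_le (fun _ => 0) _ (fun n => Rabs (q n * b n * / a n ^ 3 - 1)) 0); [intro n; split; [apply Rabs_pos|] | exact L0 | exact LZ].
    assert (HY : 0 <= Y n / (1 + Y n) <= 1).
    { assert (0 <= Y n) by (unfold Y; apply div_nonneg; [specialize (Hk n); specialize (Hy n); lra| apply pow_lt; specialize (Hk n); lra]).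
      apply frac01; lra. }
    rewrite Rabs_mult. rewrite (Rabs_right (Y n / (1 + Y n))) by lra.
    assert (0 <= Rabs (q n * b n * / a n ^ 3 - 1)) by apply Rabs_pos. nra.
Qed.
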